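(* If $G$ is a connected, claw-free cubic graph, then $\sigma_{(3,1)}(G) \le \beta(G) + 1$. Moreover, this bound is sharp: there exist connected, claw-free cubic graphs $G$ with $\sigma_{(3,1)}(G) = \beta(G)+1$.
   Context: A graph is claw-free if it has no induced subgraph isomorphic to $K_{1,3}$; it is cubic if every vertex has degree $3$. $\beta(G)$ denotes the vertex covering number (minimum size of a set of vertices meeting every edge). $(p,q)$-spreading: let $p\in\mathbb{N}$ and $q\in\mathbb{N}\cup\{\infty\}$. Start with a set $S\subseteq V(G)$ of blue vertices, all other vertices white. The color change rule: if a white vertex $w$ has at least $p$ blue neighbors, and at least one of the blue neighbors of $w$ has at most $q$ white neighbors, then $w$ is recolored blue. $S$ is a $(p,q)$-spreading set if repeatedly applying this rule eventually colors all vertices blue. $\sigma_{(p,q)}(G)$ is the minimum cardinality of a $(p,q)$-spreading set of $G$. *)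

(* Defs.v *)
From mathcomp Require Import all_boot.
Set Implicit Arguments. Unset Strict Implicit. Unset Printing Implicit Defensive.

Section Graphs.
Variable T : finType.
Variable e : rel T.

Definition simple_graph : Prop := symmetric e /\ irreflexive e.

Definition nbhd (x : T) : {set T} := [set y | e x y].

Definition cubic : Prop := forall x : T, #|nbhd x| = 3.

Definition connected_graph : Prop := forall x y : T, connect e x y.

Definition claw_free : Prop :=
  forall x a b c : T, e x a -> e x b -> e x c ->
    a != b -> a != c -> b != c -> [|| e a b, e a c | e b c].

Definition vertex_cover (C : {set T}) : bool :=
  [forall x, forall y, e x y ==> (x \in C) || (y \in C)].

Definition beta : nat :=
  #| [arg min_(C < setT | vertex_cover C) #|C| ] |.

(* (p,q)-spreading. One application of the colour change rule: from
   blue set B, a white vertex w with at least p blue neighbours, one of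
   which has at most q white neighbours, is recoloured blue. *)
Definition can_recolor (p q : nat) (B : {set T}) (w : T) : bool :=
  [&& w \notin B, p <= #|nbhd w :&: B|
    & [exists u in nbhd w :&: B, #|nbhd u :\: B| <= q]].

Definition spread_step (p q : nat) : rel {set T} :=
  fun B B' => [exists w, can_recolor p q B w && (B' == w |: B)].

Definition spreading_set (p q : nat) (S : {set T}) : bool :=
  connect (spread_step p q) S setT.

Definition sigma (p q : nat) : nat :=
  #| [arg min_(S < setT | spreading_set p q S) #|S| ] |.

End Graphs.

(* Main.v *)
Require Import Defs.
From mathcomp Require Import all_boot zify.
Set Implicit Arguments. Unset Strict Implicit. Unset Printing Implicit Defensive.


Lemma forallI n (F : 'I_n -> bool) (P : nat -> bool) :
  (forall x : 'I_n, F x = P x) -> [forall x, F x] = all P (iota 0 n).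
Proof.
move=> H; apply/forallP/allP => [G k|G x].
  by rewrite mem_iota /= => lt; rewrite -(H (Ordinal lt)).
by rewrite H; apply: G; rewrite mem_iota /= ltn_ord.
Qed.

Lemma existsI n (F : 'I_n -> bool) (P : nat -> bool) :
  (forall x : 'I_n, F x = P x) -> [exists x, F x] = has P (iota 0 n).
Proof.
move=> H; apply/existsP/hasP => [[x Fx]|[k]].
  by exists (val x); rewrite ?mem_iota /= ?ltn_ord // -H.
by rewrite mem_iota /= => lt Pk; exists (Ordinal lt); rewrite H.
Qed.

Lemma cardI n (A : {pred 'I_n}) (P : nat -> bool) :
  (forall x : 'I_n, (x \in A) = P x) -> #|A| = count P (iota 0 n).
Proof.
move=> H; rewrite cardE /enum_mem size_filter -enumT -val_enum_ord count_map.
by apply: eq_count => x /=; rewrite H.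
Qed.

Definition edges : seq (nat*nat) := [:: (4,5);(6,7);(8,9);(0,4);(1,4);(0,5);(1,5);(0,6);(2,6);(2,7);(3,7);(1,8);(3,8);(2,9);(3,9)].
Definition nbl (i : nat) : seq nat :=
  match i with 0 => [:: 4; 5; 6] | 1 => [:: 4; 5; 8] | 2 => [:: 6; 7; 9] | 3 => [:: 7; 8; 9]
  | 4 => [:: 5; 0; 1] | 5 => [:: 4; 0; 1] | 6 => [:: 7; 0; 2] | 7 => [:: 6; 2; 3]
  | 8 => [:: 9; 1; 3] | 9 => [:: 8; 2; 3] | _ => [::] end.
Definition adjn (i j : nat) : bool := j \in nbl i.
Definition ex_e : rel 'I_10 := fun x y => adjn x y.

Fixpoint allbits (n : nat) : seq (seq bool) :=
  if n is n'.+1 then map (cons true) (allbits n') ++ map (cons false) (allbits n') else [:: [::]].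

Lemma allbitsP n (m : seq bool) : size m = n -> m \in allbits n.
Proof.
elim: n m => [|n IH] [|b m] //= [sz].
by rewrite mem_cat; case: b; [apply/orP; left|apply/orP; right];
   rewrite mem_map ?IH //; move=> x y [].
Qed.

Definition I10 := iota 0 10.
Definition vcn (m : seq bool) := all (fun i => all (fun j => adjn i j ==> nth false m i || nth false m j) I10) I10.
Definition cntn (m : seq bool) := count (nth false m) I10.
Definition recn (m : seq bool) (w : nat) :=
  [&& ~~ nth false m w, 3 <= count (fun k => adjn w k && nth false m k) I10
    & has (fun u => (adjn w u && nth false m u) && (count (fun k => adjn u k && ~~ nth false m k) I10 <= 1)) I10].
Definition good (m : seq bool) :=
  (vcn m ==> (6 <= cntn m)) && ((vcn m && (cntn m <= 6)) ==> all (fun w => ~~ recn m w) I10).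

Lemma good_all : all good (allbits 10).
Proof. vm_compute. reflexivity. Qed.

Lemma checks : [&& all (fun i => all (fun j => adjn i j == adjn j i) I10) I10,
  all (fun i => ~~ adjn i i) I10,
  all (fun i => count (adjn i) I10 == 3) I10 &
  all (fun x => all (fun a => all (fun b => all (fun c =>
     adjn x a ==> adjn x b ==> adjn x c ==> (a != b) ==> (a != c) ==> (b != c) ==>
     [|| adjn a b, adjn a c | adjn b c]) I10) I10) I10) I10].
Proof. vm_compute. reflexivity. Qed.

Section Gen.
Variable T : finType.
Variable e : rel T.

Lemma vc_setT : vertex_cover e setT.
Proof. by apply/forallP => x; apply/forallP => y; rewrite !in_setT orbT implybT. Qed.

Lemma vcP C x y : vertex_cover e C -> e x y -> (x \in C) || (y \in C).
Proof. by move=> /forallP /(_ x) /forallP /(_ y) /implyP; apply. Qed.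

Lemma beta_spec : exists C, [/\ vertex_cover e C, beta e = #|C| &
  forall C', vertex_cover e C' -> #|C| <= #|C'|].
Proof.
rewrite /beta; case: (arg_minnP (fun C : {set T} => #|C|) vc_setT) => C vC min.
by exists C.
Qed.

Lemma spread_setT p q : spreading_set e p q setT.
Proof. exact: connect0. Qed.

Lemma sigma_spec p q : exists S, [/\ spreading_set e p q S, sigma e p q = #|S| &
  forall S', spreading_set e p q S' -> #|S| <= #|S'|].
Proof.
rewrite /sigma; case: (arg_minnP (fun C : {set T} => #|C|) (spread_setT p q)) => S vS min.
by exists S.
Qed.

Lemma sigma_le p q S : spreading_set e p q S -> sigma e p q <= #|S|.
Proof. by case: (sigma_spec p q) => S0 [_ -> H] /H. Qed.

Lemma closed_connect (Z : {set T}) :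
  (forall y z, y \in Z -> e y z -> z \in Z) -> forall x y, connect e x y -> x \in Z -> y \in Z.
Proof.
move=> H x y /connectP [p]; elim: p x => [|a p IH] x /=; first by move=> _ ->.
by move=> /andP[exa pa] ly xZ; exact: IH pa ly (H _ _ xZ exa).
Qed.

Lemma nbhd_sub w B : #|nbhd e w| = 3 -> 3 <= #|nbhd e w :&: B| -> nbhd e w \subset B.
Proof.
move=> c3 c; have sub : nbhd e w :&: B \subset nbhd e w by apply: subsetIl.
have eqc : #|nbhd e w :&: B| = #|nbhd e w|.
  by apply/eqP; rewrite eqn_leq subset_leq_card // c3.
move/subset_cardP: (eqc) => /(_ sub) eqs.
by apply/subsetP => y; rewrite -eqs inE => /andP[].
Qed.

Hypothesis sg : simple_graph e.
Hypothesis cub : cubic e.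

Lemma spread_cover q S : spreading_set e 3 q S -> vertex_cover e S.
Proof.
case: sg => sym irr.
move/connectP => [p].
suff H : forall B : {set T}, S \subset B -> (forall x y, e x y -> x \notin S -> y \notin S -> x \notin B) ->
   path (spread_step e 3 q) B p -> setT = last B p -> vertex_cover e S.
  by apply: H => //.
elim: p => [|B' p IH] B sSB inv /=.
  move=> _ eB; apply/forallP => x; apply/forallP => y; apply/implyP => exy.
  case xS: (x \in S); case yS: (y \in S) => //=.
  by move: (inv x y exy); rewrite xS yS -eB inE => /(_ isT isT).
move=> /andP[st pth] lst.
case/existsP: st => w /andP[/and3P[wB c3 _] /eqP eB'].
have nsub := nbhd_sub (cub w) c3.
apply: (IH B') => //; rewrite eB'.
  by apply: subset_trans sSB (subsetUr _ _).
move=> x y exy xS yS; rewrite !inE negb_or (inv x y exy xS yS) andbT.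
apply/eqP => xw; subst x.
have yB : y \in B by apply: (subsetP nsub); rewrite inE.
by move: (inv y w); rewrite sym exy yS xS yB => /(_ isT isT isT).
Qed.

Hypothesis con : connected_graph e.
Hypothesis cf : claw_free e.

Lemma key (C : {set T}) (v : T) (B : {set T}) : vertex_cover e C -> v \notin C -> C \subset B -> v \in B -> B != setT ->
  exists w, can_recolor e 3 1 B w.
Proof.
case: sg => sym irr.
move=> vC nvC CB vB BT.
case: (pickP (can_recolor e 3 1 B)) => [w Hw|H]; first by exists w.
exfalso.
have [w0 w0B] : exists w0, w0 \notin B.
  case: (pickP (fun x => x \notin B)) => [x Hx|H']; first by exists x.
  by exfalso; move/eqP: BT; apply; apply/setP => x; move: (H' x); rewrite inE /=; case: (x \in B).
have CBn x : x \notin B -> x \notin C by apply: contra => /(subsetP CB).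
have nbC w u : w \notin B -> e w u -> u \in C.
  move=> wB ewu; move: (vcP vC ewu); rewrite (negbTE (CBn _ wB)) //.
pose Z := [set z | (z \notin B) || [exists y, e z y && (y \notin B)]].
have clo : forall y z, y \in Z -> e y z -> z \in Z.
  move=> y z; rewrite !inE => /orP[yB|/existsP[w /andP[eyw wB]]] eyz.
    by apply/orP; right; apply/existsP; exists y; rewrite sym eyz.
  case zB: (z \in B) => //=.
  have nsub : nbhd e w \subset B.
    apply/subsetP => u; rewrite inE => ewu; apply: (subsetP CB); exact: nbC ewu.
  have yB : y \in B by apply: (subsetP CB); apply: (nbC w) => //; rewrite sym.
  have : 1 < #|nbhd e y :\: B|.
    move: (H w); rewrite /can_recolor wB /=.
    have -> : nbhd e w :&: B = nbhd e w by apply/setIidPl.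
    rewrite cub /= => /existsPn /(_ y); rewrite !inE sym eyw /=.
    by rewrite ltnNge.
  case/card_gt1P => [x1 [x2 [x1i x2i x12]]].
  have [w' [w'B eyw' ww']] : exists w', [/\ w' \notin B, e y w' & w != w'].
    move: x1i x2i; rewrite !inE => /andP[x1B eyx1] /andP[x2B eyx2].
    case: (eqVneq w x1) => [wx1|wx1]; last by exists x1.
    by exists x2; split => //; rewrite wx1.
  have wz : w != z by apply/eqP => wz; move: wB; rewrite wz zB.
  have w'z : w' != z by apply/eqP => wz2; move: w'B; rewrite wz2 zB.
  case/or3P: (cf eyw eyw' eyz ww' wz w'z) => [eww'|ewz|ew'z].
  - by move: (vcP vC eww'); rewrite (negbTE (CBn _ wB)) (negbTE (CBn _ w'B)).
  - by apply/existsP; exists w; rewrite sym ewz.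
  - by apply/existsP; exists w'; rewrite sym ew'z.
have : v \in Z by apply: (closed_connect clo (con w0 v)); rewrite inE w0B.
rewrite inE vB /= => /existsP [y /andP[evy yB]].
by move: (vcP vC evy); rewrite (negbTE nvC) /= => /(subsetP CB); rewrite (negbTE yB).
Qed.

Lemma spread_from (C : {set T}) (v : T) : vertex_cover e C -> v \notin C ->
  forall B : {set T}, C \subset B -> v \in B -> spreading_set e 3 1 B.
Proof.
move=> vC nvC.
suff : forall k (B : {set T}), #|T| - #|B| <= k -> C \subset B -> v \in B -> spreading_set e 3 1 B.
  by move=> H B; apply: (H _ B (leqnn _)).
elim => [|k IH] B Bk CB vB.
  have -> : B = setT by apply/eqP; rewrite eqEcard subsetT cardsT; lia.
  exact: spread_setT.
case: (eqVneq B setT) => [->|BT]; first exact: spread_setT.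
case: (key vC nvC CB vB BT) => w Hw.
apply: (connect_trans (connect1 _)); first by apply/existsP; exists w; rewrite Hw; apply: eqxx.
have wB : w \notin B by case/and3P: Hw.
apply: IH.
- by rewrite cardsU1 wB; lia.
- by apply: subset_trans CB (subsetUr _ _).
- by rewrite inE vB orbT.
Qed.

Lemma part1 : sigma e 3 1 <= beta e + 1.
Proof.
case: beta_spec => C [vC -> _].
case: (pickP (fun x => x \notin C)) => [v nvC|H].
  apply: (leq_trans (sigma_le (spread_from vC nvC (subsetUr _ _) (setU11 _ _)))).
  by rewrite cardsU1 nvC addnC.
have -> : C = setT by apply/setP => x; move: (H x); rewrite inE /=; case: (x \in C).
apply: leq_trans (sigma_le (spread_setT 3 1)) _; exact: leq_addr.
Qed.

End Gen.

Lemma allI n (P : nat -> bool) : all P (iota 0 n) -> forall x : 'I_n, P x.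
Proof. by move=> /allP H x; apply: H; rewrite mem_iota /= ltn_ord. Qed.

Definition bits (C : {set 'I_10}) : seq bool := map (fun k => inord k \in C) I10.

Lemma memb (C : {set 'I_10}) (x : 'I_10) : (x \in C) = nth false (bits C) x.
Proof.
by rewrite (nth_map 0) ?size_iota ?ltn_ord // nth_iota ?ltn_ord // add0n inord_val.
Qed.

Section Br.
Variables (C : {set 'I_10}) (m : seq bool).
Hypothesis Hm : forall x : 'I_10, (x \in C) = nth false m x.

Lemma vc_br : vertex_cover ex_e C = vcn m.
Proof.
rewrite /vertex_cover; apply: forallI => x; apply: forallI => y.
by rewrite !Hm.
Qed.

Lemma card_br : #|C| = cntn m.
Proof. exact: cardI. Qed.

Lemma rec_br w : can_recolor ex_e 3 1 C w = recn m w.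
Proof.
rewrite /can_recolor /recn Hm.
have E : #|nbhd ex_e w :&: C| = count (fun k => adjn w k && nth false m k) I10.
  by apply: cardI => x; rewrite !inE Hm.
congr [&& _, _ & _]; first by rewrite E.
apply: existsI => u; rewrite !inE Hm.
have E2 : #|nbhd ex_e u :\: C| = count (fun k => adjn u k && ~~ nth false m k) I10.
  by apply: cardI => x; rewrite !inE Hm andbC.
by rewrite E2.
Qed.
End Br.

Lemma good_C (C : {set 'I_10}) : good (bits C).
Proof.
have /allP := good_all; apply; apply: allbitsP; by rewrite size_map size_iota.
Qed.

Lemma ex_simple : simple_graph ex_e.
Proof.
case/and4P: checks => c1 c2 _ _; split.
  by move=> x y; apply/eqP; move: (allI c1 x) => /allI; apply.
by move=> x; apply/negbTE; exact: (allI c2 x).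
Qed.

Lemma ex_cubic : cubic ex_e.
Proof.
case/and4P: checks => _ _ c3 _ x.
rewrite (cardI (P := adjn x)); last by move=> y; rewrite inE.
by apply/eqP; move: (allI c3 x).
Qed.

Lemma ex_claw : claw_free ex_e.
Proof.
case/and4P: checks => _ _ _ c4 x a b c.
move: (allI c4 x) => /allI /(_ a) /allI /(_ b) /allI /(_ c).
rewrite /ex_e => /implyP H /H{H} /implyP H /H{H} /implyP H /H{H} /implyP H /H{H} /implyP H /H{H} /implyP H /H{H}. by [].
Qed.

Lemma ex_conn : connected_graph ex_e.
Proof.
have step : forall a b (ha : a < 10) (hb : b < 10),
    connect ex_e (Ordinal (isT : 0 < 10)) (Ordinal ha) -> adjn a b ->
    connect ex_e (Ordinal (isT : 0 < 10)) (Ordinal hb).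
  by move=> a b ha hb c h; apply: connect_trans c (connect1 _).
have c0 : connect ex_e (Ordinal (isT : 0 < 10)) (Ordinal (isT : 0 < 10)) by [].
have c4 := step 0 4 isT isT c0 isT.
have c5 := step 0 5 isT isT c0 isT.
have c6 := step 0 6 isT isT c0 isT.
have c1 := step 4 1 isT isT c4 isT.
have c2 := step 6 2 isT isT c6 isT.
have c7 := step 6 7 isT isT c6 isT.
have c3 := step 7 3 isT isT c7 isT.
have c8 := step 1 8 isT isT c1 isT.
have c9 := step 2 9 isT isT c2 isT.
have all0 : forall x : 'I_10, connect ex_e (Ordinal (isT : 0 < 10)) x.
  case=> [[|[|[|[|[|[|[|[|[|[|k]]]]]]]]]] kl] //;
  by rewrite (bool_irrelevance kl isT).
have sym : connect_sym ex_e by apply: sym_connect_sym; case: ex_simple.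
move=> x y; apply: connect_trans (all0 y); rewrite sym; exact: all0.
Qed.

Lemma part2 : sigma ex_e 3 1 = beta ex_e + 1.
Proof.
pose m0 := [:: false; false; false; false; true; true; true; true; true; true].
pose C0 := [set x : 'I_10 | nth false m0 x].
have HC0 : forall x : 'I_10, (x \in C0) = nth false m0 x by move=> x; rewrite inE.
have betaE : beta ex_e = 6.
  case: (beta_spec ex_e) => C [vC -> minC].
  apply/eqP; rewrite eqn_leq; apply/andP; split.
    apply: leq_trans (minC C0 _) _; first by rewrite (vc_br HC0).
    by rewrite (card_br HC0).
  move/andP: (good_C C) => [/implyP g _].
  by rewrite (card_br (memb C)); apply: g; rewrite -(vc_br (memb C)).
rewrite betaE; apply/eqP; rewrite eqn_leq; apply/andP; split.
  apply: leq_trans (part1 ex_simple ex_cubic ex_conn ex_claw) _; by rewrite betaE.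
case: (sigma_spec ex_e 3 1) => S [sS -> _].
rewrite ltnNge; apply/negP => le6.
have vS := spread_cover ex_simple ex_cubic sS.
move/andP: (good_C S) => [_ /implyP g].
have := g; rewrite -(vc_br (memb S)) vS -(card_br (memb S)) le6 => /(_ isT) /allP stuck.
move/connectP: sS => [[|B' p] /= pth lst].
  by move: le6; rewrite -lst cardsT card_ord.
case/andP: pth => /existsP [w /andP [rw _]] _.
by move: (stuck w); rewrite mem_iota ltn_ord -(rec_br (memb S)) rw => /(_ isT).
Qed.

Theorem proposition3p12 :
  (forall (T : finType) (e : rel T),
      simple_graph e -> connected_graph e -> claw_free e -> cubic e ->
      sigma e 3 1 <= beta e + 1)
  /\
  (exists (T : finType) (e : rel T),
      [/\ simple_graph e, connected_graph e, claw_free e, cubic e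
        & sigma e 3 1 = beta e + 1]).
Proof.
split.
  by move=> T e sg con cf cub; apply: part1.
exists (ordinal 10), ex_e; split.
- exact: ex_simple.
- exact: ex_conn.
- exact: ex_claw.
- exact: ex_cubic.
- exact: part2.
Qed.
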